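(* Let $X = \{x\in\mathbb{R}^n_+ : A_x x \ge b_x\}$ and $Y = \{y\in\mathbb{R}^m_+ : A_y y\ge b_y\}$, and $Q\in\mathbb{R}^{n\times m}_{\ge 0}$. Assume $\min\{c^\top x + d^\top y : x = Qy,\ x\in X,\ y\in Y\}$ has a finite optimal value. Let $(\hat\gamma,\hat\nu)$ be an optimal solution of $$\max_{\gamma,\nu}\{\gamma^\top b_x + \nu^\top b_y : Q^\top A_x^\top\gamma + A_y^\top\nu \le Q^\top c + d,\ \gamma\ge 0,\ \nu\ge 0\}$$ (the dual of $\min\{(Q^\top c + d)^\top y : A_x Q y\ge b_x,\ A_y y\ge b_y,\ y\ge 0\}$), and set $\hat\alpha := c - A_x^\top\hat\gamma$. Then $\hat\alpha$ is an optimal solution of $$\max_{\alpha\in\mathbb{R}^n}\{\sigma_X(c - \alpha) + \sigma_Y(Q^\top\alpha + d)\}.$$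
   Context: For $\mathcal{X}\subseteq\mathbb{R}^k$, $\sigma_{\mathcal{X}}(\alpha) := \inf_{x\in\mathcal{X}}\alpha^\top x$. $c\in\mathbb{R}^n$, $d\in\mathbb{R}^m$, and $A_x, b_x, A_y, b_y$ are matrices/vectors of compatible dimensions. *)

(* Defs.v *)
From mathcomp Require Import all_boot all_order all_algebra.
From mathcomp Require Import all_classical all_reals ereal.
Set Implicit Arguments. Unset Strict Implicit. Unset Printing Implicit Defensive.
Import Order.TTheory GRing.Theory Num.Theory.
Local Open Scope ring_scope.
Local Open Scope classical_set_scope.

Section Defs.
Variable R : realType.

Definition dotv k (a x : 'cV[R]_k) : R := (a^T *m x) 0 0.

Definition vle k (u v : 'cV[R]_k) : Prop := forall i, u i 0 <= v i 0.

Definition polyset k p (A : 'M[R]_(p, k)) (b : 'cV[R]_p) : set 'cV[R]_k :=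
  [set x | vle 0 x /\ vle b (A *m x)].

Definition sigma k (S : set 'cV[R]_k) (alpha : 'cV[R]_k) : \bar R :=
  ereal_inf [set (dotv alpha x)%:E | x in S].
End Defs.

(* Main.v *)
Require Import Defs.
From mathcomp Require Import all_boot all_order all_algebra.
From mathcomp Require Import all_classical all_reals ereal.
From mathcomp Require Import ring lra.
Import Order.TTheory GRing.Theory Num.Theory.
Local Open Scope ring_scope.
Local Open Scope classical_set_scope.

Section Helpers.
Set Implicit Arguments. Unset Strict Implicit. Unset Printing Implicit Defensive.
Section Farkas.
Variable R : realType.

Lemma dotvE k (a x : 'cV[R]_k) : dotv a x = \sum_i a i 0 * x i 0.
Proof. by rewrite /dotv !mxE; apply: eq_bigr => i _; rewrite mxE. Qed.

Lemma dotvDl k (a b x : 'cV[R]_k) : dotv (a + b) x = dotv a x + dotv b x.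
Proof. by rewrite !dotvE -big_split; apply: eq_bigr => i _; rewrite mxE mulrDl. Qed.

Lemma dotvZl k l (a x : 'cV[R]_k) : dotv (l *: a) x = l * dotv a x.
Proof. by rewrite !dotvE mulr_sumr; apply: eq_bigr => i _; rewrite mxE mulrA. Qed.

Lemma dotvC k (a x : 'cV[R]_k) : dotv a x = dotv x a.
Proof. by rewrite !dotvE; apply: eq_bigr => i _; rewrite mulrC. Qed.

Lemma dotvDr k (a b x : 'cV[R]_k) : dotv x (a + b) = dotv x a + dotv x b.
Proof. by rewrite !(dotvC x) dotvDl. Qed.

Lemma dotvZr k l (a x : 'cV[R]_k) : dotv x (l *: a) = l * dotv x a.
Proof. by rewrite !(dotvC x) dotvZl. Qed.

Lemma dotvNl k (a x : 'cV[R]_k) : dotv (- a) x = - dotv a x.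
Proof. by rewrite -scaleN1r dotvZl mulN1r. Qed.

Lemma dotvNr k (a x : 'cV[R]_k) : dotv x (- a) = - dotv x a.
Proof. by rewrite !(dotvC x) dotvNl. Qed.

Lemma dotvBl k (a b x : 'cV[R]_k) : dotv (a - b) x = dotv a x - dotv b x.
Proof. by rewrite dotvDl dotvNl. Qed.

Lemma dotv0l k (x : 'cV[R]_k) : dotv 0 x = 0.
Proof. by rewrite dotvE big1 // => i _; rewrite mxE mul0r. Qed.

Lemma dotv_tr k p (A : 'M[R]_(p, k)) g x : dotv (A^T *m g) x = dotv g (A *m x).
Proof. by rewrite /dotv trmx_mul trmxK mulmxA. Qed.

Lemma dotv_ge0 k (a x : 'cV[R]_k) : vle 0 a -> vle 0 x -> 0 <= dotv a x.
Proof.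
move=> ha hx; rewrite dotvE; apply: sumr_ge0 => i _; apply: mulr_ge0.
- by have := ha i; rewrite mxE.
- by have := hx i; rewrite mxE.
Qed.

Lemma dotv_le k (g u v : 'cV[R]_k) : vle 0 g -> vle u v -> dotv g u <= dotv g v.
Proof.
move=> hg huv; rewrite !dotvE; apply: ler_sum => i _; apply: ler_wpM2l => //.
by have := hg i; rewrite mxE.
Qed.

Fixpoint posall k (s : seq 'cV[R]_k) (x : 'cV[R]_k) : Prop :=
  if s is a :: s' then 0 <= dotv a x /\ posall s' x else True.

Fixpoint incone k (s : seq 'cV[R]_k) (w : 'cV[R]_k) : Prop :=
  if s is a :: s' then exists l, 0 <= l /\ incone s' (w - l *: a) else w = 0.

Lemma incone_pos k (s : seq 'cV[R]_k) u x : incone s u -> posall s x -> 0 <= dotv u x.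
Proof.
elim: s u => [|a s IH] u /=; first by move=> -> _; rewrite dotv0l.
case=> l [l0 H] [ha hs]; have := IH _ H hs; rewrite dotvBl dotvZl => h.
by have := addr_ge0 h (mulr_ge0 l0 ha); rewrite subrK.
Qed.

Lemma incone_map k (f : 'cV[R]_k -> R) a s v :
  incone (map (fun b => b + f b *: a) s) v -> exists u mu, incone s u /\ v = u + mu *: a.
Proof.
elim: s v => [|b s IH] v /=.
  by move=> ->; exists 0, 0; split => //; rewrite scale0r addr0.
case=> l [l0 /IH [u [mu [Hu Hv]]]]; exists (u + l *: b), (mu + l * f b); split.
  by exists l; split => //; rewrite addrK.
apply/matrixP => i j; have /matrixP/(_ i j) := Hv; rewrite !mxE => h.
have -> : v i j = (v i j - l * (b i j + f b * a i j)) + l * (b i j + f b * a i j) by ring.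
rewrite h; ring.
Qed.

Lemma posall_map k (s : seq 'cV[R]_k) x (p : 'cV[R]_k -> 'cV[R]_k) x' :
  (forall b, dotv (p b) x = dotv b x') -> posall (map p s) x -> posall s x'.
Proof. by move=> hp; elim: s => [|a s IH] //= [h1 h2]; split; [rewrite -hp|apply: IH]. Qed.

Lemma HFseq n k (s : seq 'cV[R]_k) w : size s = n ->
  (forall x, posall s x -> 0 <= dotv w x) -> incone s w.
Proof.
elim: n s w => [|n IH] [|a s] w //= hs H.
- apply/matrixP => i j; rewrite (ord1 j) mxE; apply/eqP; rewrite eq_le.
  have h1 := H (delta_mx i 0) I; have h2 := H (- delta_mx i 0) I.
  rewrite dotvNr /dotv -colE !mxE in h1 h2.
  by rewrite h1 andbT -oppr_ge0.
- case: hs => hs.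
  have [H1|H1] := pselect (forall x, posall s x -> 0 <= dotv w x).
    by exists 0; split => //; rewrite scale0r subr0; apply: IH.
  move/existsNP: H1 => [x0 /not_implyP [Hs0 Hw0]].
  have hw : dotv w x0 < 0 by rewrite ltNge; apply/negP.
  have ha : dotv a x0 < 0.
    by rewrite ltNge; apply/negP => h; have := H x0 (conj h Hs0); rewrite leNgt hw.
  have ha0 : dotv a x0 != 0 by rewrite lt_eqF.
  pose f b := - (dotv b x0 / dotv a x0).
  pose p b := b + f b *: a.
  have Hp : incone (map p s) (p w).
    apply: (IH _ _ (etrans (size_map _ _) hs)) => x Hx.
    pose x' := x + (- (dotv a x / dotv a x0)) *: x0.
    have hp : forall b, dotv (p b) x = dotv b x'.
      move=> b; rewrite /p /f /x' dotvDl dotvZl dotvDr dotvZr (dotvC a x).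
      idtac.
      ring.
    have := posall_map hp Hx => Hs'.
    have ha' : dotv a x' = 0.
      rewrite /x' dotvDr dotvZr; field.
      done.
    by rewrite hp; apply: H; split => //; rewrite ha'.
  have [u [mu [Hu Hpw]]] := incone_map Hp.
  pose kap := mu - f w.
  have Hw : w = u + kap *: a.
    apply/matrixP => i j; have /matrixP/(_ i j) := Hpw; rewrite /p !mxE => h.
    rewrite /kap; have -> : w i j = (w i j + f w * a i j) - f w * a i j by ring.
    rewrite h; ring.
  exists kap; split; last by rewrite Hw addrK.
  have hu := incone_pos Hu Hs0.
  have he : dotv w x0 = dotv u x0 + kap * dotv a x0 by rewrite {1}Hw dotvDl dotvZl.
  nra.
Qed.

Lemma posall_mapf k I (f : I -> 'cV[R]_k) r z :
  (forall i, 0 <= dotv (f i) z) -> posall (map f r) z.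
Proof. by move=> h; elim: r => //= i r ->; split. Qed.

Lemma incone_mx k p (L : 'M[R]_(k, p)) r w :
  incone (map (fun i => L *m delta_mx i 0) r) w -> exists lam, vle 0 lam /\ w = L *m lam.
Proof.
elim: r w => [|i r IH] w /=.
  by move=> ->; exists 0; split; [move=> j; rewrite mxE|rewrite mulmx0].
case=> l [l0 /IH [lam [hl Hw]]]; exists (lam + l *: delta_mx i 0); split.
  move=> j; rewrite !mxE; apply: addr_ge0; first by have := hl j; rewrite mxE.
  by apply: mulr_ge0 => //; rewrite ler0n.
by rewrite mulmxDr -scalemxAr -Hw subrK.
Qed.

Lemma HFmx k p (L : 'M[R]_(k, p)) w :
  (forall z, vle 0 (L^T *m z) -> 0 <= dotv w z) -> exists lam, vle 0 lam /\ w = L *m lam.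
Proof.
move=> H; apply: (@incone_mx _ _ L (enum 'I_p)).
apply: (HFseq (erefl _)) => z Hz; apply: H => i; rewrite mxE.
have : forall x, posall (map (fun i => L *m delta_mx i 0) (enum 'I_p)) z ->
   x \in enum 'I_p -> 0 <= dotv (L *m delta_mx x 0) z.
  move=> x; elim: (enum 'I_p) => //= j r IH [h1 h2]; rewrite inE => /orP[/eqP->//|]; exact: IH.
move=> /(_ i Hz); rewrite mem_enum => /(_ isT).
by rewrite /dotv trmx_mul trmx_delta -mulmxA -rowE mxE.
Qed.

End Farkas.

Section Aux.
Variable R : realType.

Lemma vle_col p1 p2 (a c : 'cV[R]_p1) (b d : 'cV[R]_p2) :
  vle (col_mx a b) (col_mx c d) <-> vle a c /\ vle b d.
Proof.
split.
  move=> h; split => i; [have := h (lshift p2 i)|have := h (rshift p1 i)];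
  by rewrite ?col_mxEu ?col_mxEd.
case=> h1 h2 i; rewrite -(splitK i); case: (fintype.split i) => j /=;
by rewrite ?col_mxEu ?col_mxEd.
Qed.

Lemma vle0_col p1 p2 (a : 'cV[R]_p1) (b : 'cV[R]_p2) :
  vle 0 (col_mx a b) <-> vle 0 a /\ vle 0 b.
Proof. by rewrite -col_mx0 vle_col. Qed.

Lemma dotv_col p1 p2 (a1 x1 : 'cV[R]_p1) (a2 x2 : 'cV[R]_p2) :
  dotv (col_mx a1 a2) (col_mx x1 x2) = dotv a1 x1 + dotv a2 x2.
Proof. by rewrite /dotv tr_col_mx mul_row_col mxE. Qed.

Lemma mul_cV1 p (b : 'cV[R]_p) (s : 'cV[R]_1) i : (b *m s) i 0 = b i 0 * s 0 0.
Proof. by rewrite mxE big_ord1. Qed.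

Lemma vle_sub p (u v : 'cV[R]_p) : vle u v <-> vle 0 (v - u).
Proof.
by split=> h i; have := h i; rewrite !mxE subr_ge0.
Qed.

Lemma dotv_sc1 (t : R) (s : 'cV[R]_1) : dotv (- t%:M) s = - t * s 0 0.
Proof. by rewrite dotvE big_ord1 !mxE /= mulr1n. Qed.

End Aux.

Theorem duality (R : realType) (n m px py : nat)
  (Ax : 'M[R]_(px, n)) (bx : 'cV[R]_px) (Ay : 'M[R]_(py, m)) (by_ : 'cV[R]_py)
  (Q : 'M[R]_(n, m)) (w : 'cV[R]_m) (t D : R)
  (HQ : forall i j, 0 <= Q i j)
  (Hne : exists y0, vle bx (Ax *m (Q *m y0)) /\ vle by_ (Ay *m y0) /\ vle 0 y0)
  (Hlb : forall y, vle bx (Ax *m (Q *m y)) -> vle by_ (Ay *m y) -> vle 0 y ->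
           t <= dotv w y)
  (Hopt : forall (g : 'cV[R]_px) (v : 'cV[R]_py),
      vle (Q^T *m Ax^T *m g + Ay^T *m v) w -> vle 0 g -> vle 0 v ->
      dotv g bx + dotv v by_ <= D) : t <= D.
Proof.
pose N := col_mx (Ax *m Q) (col_mx Ay (1%:M : 'M[R]_m)).
pose beta := col_mx bx (col_mx by_ (0 : 'cV[R]_m)).
have feas : forall y, vle beta (N *m y) -> t <= dotv w y.
  move=> y; rewrite /N /beta !mul_col_mx mul1mx => /vle_col [h1 /vle_col [h2 h3]].
  by apply: Hlb => //; rewrite mulmxA.
have feas0 : exists y0, vle beta (N *m y0).
  case: Hne => y0 [h1 [h2 h3]]; exists y0.
  by rewrite /N /beta !mul_col_mx mul1mx -mulmxA; apply/vle_col; split => //; apply/vle_col.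
pose L := row_mx (col_mx N^T (- beta^T)) (col_mx (0 : 'cV[R]_m) (1 : 'M[R]_1)).
pose w' := col_mx w (- t%:M : 'M[R]_1).
have HL : forall z, vle 0 (L^T *m z) -> 0 <= dotv w' z.
  move=> z; rewrite -(vsubmxK z); set y := usubmx z; set s := dsubmx z.
  rewrite /L tr_row_mx (tr_col_mx N^T (- beta^T)) (tr_col_mx (0:'cV[R]_m) (1 : 'M[R]_1)) trmxK linearN /= trmxK trmx0 trmx1.
  idtac.
  rewrite !mul_col_mx !mul_row_col mul0mx mul1mx add0r mulNmx => /vle0_col [hy hs].
  rewrite /w' dotv_col dotv_sc1.
  have hs0 : 0 <= s 0 0 by have := hs 0; rewrite mxE.
  have hb : forall i, beta i 0 * s 0 0 <= (N *m y) i 0.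
    by move=> i; rewrite -mul_cV1; exact: (proj2 (vle_sub _ _) hy i).
  have [s0|spos] : s 0 0 = 0 \/ 0 < s 0 0.
    by move: hs0; rewrite le0r => /orP[/eqP->|->]; [left|right].
  - rewrite s0 mulr0 addr0 leNgt; apply/negP => hneg.
    case: feas0 => y0 hy0.
    have ht0 := feas _ hy0.
    pose r := (dotv w y0 - t + 1) / (- dotv w y).
    have r0 : 0 <= r by apply: divr_ge0; lra.
    have hr : r * dotv w y = - (dotv w y0 - t + 1).
      by rewrite /r; field; rewrite lt_eqF.
    have := feas (y0 + r *: y).
    have -> : dotv w (y0 + r *: y) = dotv w y0 + r * dotv w y by rewrite dotvDr dotvZr.
    rewrite hr.
    have H : vle beta (N *m (y0 + r *: y)).
      move=> i; rewrite mulmxDr -scalemxAr.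
      have -> : (N *m y0 + r *: (N *m y)) i 0 = (N *m y0) i 0 + r * (N *m y) i 0 by rewrite !mxE.
      have := hy0 i; have := hb i; rewrite s0 mulr0 => h1 h2.
      have := mulr_ge0 r0 h1; lra.
    move=> /(_ H); lra.
  - have := feas ((s 0 0)^-1 *: y).
    have H : vle beta (N *m ((s 0 0)^-1 *: y)).
      move=> i; rewrite -scalemxAr [X in _ <= X]mxE.
      rewrite -(ler_pM2l spos) mulrA mulfV ?gt_eqF // mul1r mulrC; exact: hb.
    move=> /(_ H); rewrite dotvZr => h.
    have := ler_wpM2l (ltW spos) h; rewrite mulrA mulfV ?gt_eqF // mul1r.
    lra.
have [lam [hlam Hw]] := HFmx HL.
move: hlam Hw; rewrite -(vsubmxK lam); set l1 := usubmx lam; set l2 := dsubmx lam.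
rewrite /L mul_row_col !mul_col_mx mul0mx mul1mx add_col_mx addr0 mulNmx.
rewrite (mx11_scalar (beta^T *m l1)) -/(dotv beta l1).
move=> /vle0_col [hl1 hl2] /eq_col_mx [Hw1 Ht].
have {Ht} Ht : - t = - dotv beta l1 + l2 0 0.
  by move/matrixP/(_ 0 0): Ht; rewrite !mxE /= !mulr1n.
have hl20 : 0 <= l2 0 0 by have := hl2 0; rewrite mxE.
move: hl1 Hw1 Ht; rewrite -(vsubmxK l1) -(vsubmxK (dsubmx l1)).
set g := usubmx l1; set v := usubmx (dsubmx l1); set mu := dsubmx (dsubmx l1).
move=> /vle0_col [hg /vle0_col [hv hmu]].
rewrite /N !tr_col_mx trmx1 trmx_mul !mul_row_col mul1mx => Hw1.
rewrite /beta !dotv_col dotv0l addr0 => Ht.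
have Hle : vle (Q^T *m Ax^T *m g + Ay^T *m v) w.
  apply/(proj2 (vle_sub _ _)); rewrite Hw1 addrA.
  have E : forall (X Y : 'cV[R]_m), X + Y - X = Y by move=> X Y; rewrite addrAC subrr add0r.
  by rewrite E.
have := Hopt g v Hle hg hv.
rewrite (dotvC g) (dotvC v); lra.
Qed.


End Helpers.

Theorem mainTheorem9 (R : realType) (n m px py : nat)
  (Ax : 'M[R]_(px, n)) (bx : 'cV[R]_px) (Ay : 'M[R]_(py, m)) (by_ : 'cV[R]_py)
  (Q : 'M[R]_(n, m)) (c : 'cV[R]_n) (d : 'cV[R]_m)
  (HQ : forall i j, 0 <= Q i j)
  (Hfinite : ereal_inf [set ((dotv c xy.1 + dotv d xy.2)%:E : \bar R) |
       xy in [set xy : 'cV[R]_n * 'cV[R]_m |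
              xy.1 = Q *m xy.2 /\ polyset Ax bx xy.1 /\ polyset Ay by_ xy.2]]
     \is a fin_num)
  (gam : 'cV[R]_px) (nu : 'cV[R]_py)
  (Hfeas : vle (Q^T *m Ax^T *m gam + Ay^T *m nu) (Q^T *m c + d)
           /\ vle 0 gam /\ vle 0 nu)
  (Hopt : forall (g : 'cV[R]_px) (v : 'cV[R]_py),
      vle (Q^T *m Ax^T *m g + Ay^T *m v) (Q^T *m c + d) -> vle 0 g -> vle 0 v ->
      dotv g bx + dotv v by_ <= dotv gam bx + dotv nu by_) :
  let alpha_hat := c - Ax^T *m gam in
  forall alpha : 'cV[R]_n,
    (sigma (polyset Ax bx) (c - alpha) + sigma (polyset Ay by_) (Q^T *m alpha + d)
     <= sigma (polyset Ax bx) (c - alpha_hat)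
        + sigma (polyset Ay by_) (Q^T *m alpha_hat + d))%E.
Proof.
move=> alpha_hat alpha.
set S := [set _ | xy in _] in Hfinite.
have Hne : exists xy : 'cV[R]_n * 'cV[R]_m,
    xy.1 = Q *m xy.2 /\ polyset Ax bx xy.1 /\ polyset Ay by_ xy.2.
  apply: contrapT => hne; move: Hfinite.
  have -> : ereal_inf S = +oo%E.
    apply/ereal_inf_pinfty => e [xy hxy _]; exfalso; apply: hne; by exists xy.
  by [].
pose t := fine (ereal_inf S).
have ht : (t%:E) = ereal_inf S := fineK Hfinite.
have Hlbt : forall xy : 'cV[R]_n * 'cV[R]_m,
    xy.1 = Q *m xy.2 /\ polyset Ax bx xy.1 /\ polyset Ay by_ xy.2 ->
    t <= dotv c xy.1 + dotv d xy.2.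
  by move=> xy hxy; rewrite -lee_fin ht; apply: ereal_inf_lbound; exists xy.
have key : t <= dotv gam bx + dotv nu by_.
  apply: (@duality R n m px py Ax bx Ay by_ Q (Q^T *m c + d) t _ HQ) => //.
    case: Hne => [[x y] /= [-> [[_ h1] [h2 h3]]]]; by exists y.
  move=> y h1 h2 h3.
  have := Hlbt (Q *m y, y); rewrite /= dotvDl dotv_tr; apply; split => //.
  split; split => //.
  move=> i; rewrite [X in X <= _]mxE mxE; apply: sumr_ge0 => j _.
  by apply: mulr_ge0 => //; have := h3 j; rewrite mxE.
case: Hfeas => [hfe [hg hn]].
apply: (@le_trans _ _ (t%:E)).
  rewrite ht; apply: le_ereal_inf_tmp => e [xy [hq [hX hY]] <-].
  apply: (@le_trans _ _ ((dotv (c - alpha) xy.1)%:E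
                        + (dotv (Q^T *m alpha + d) xy.2)%:E)).
    by apply: leeD; apply: ereal_inf_lbound; [exists xy.1|exists xy.2].
  rewrite -EFinD lee_fin hq dotvBl dotvDl dotv_tr; lra.
apply: (@le_trans _ _ ((dotv gam bx)%:E + (dotv nu by_)%:E)).
  by rewrite -EFinD lee_fin.
apply: leeD; apply: le_ereal_inf_tmp => e [x [hx0 hxb] <-]; rewrite lee_fin.
  have -> : c - alpha_hat = Ax^T *m gam by rewrite /alpha_hat opprB addrC subrK.
  by rewrite dotv_tr; apply: dotv_le.
have h1 := dotv_le hn hxb.
have h2 := dotv_ge0 (proj1 (vle_sub _ _) hfe) hx0.
rewrite /alpha_hat mulmxBr mulmxA dotvDl dotvBl.
rewrite dotvBl !dotvDl (dotv_tr Ay) in h2.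
lra.
Qed.
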